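(* Let $\mathbf{X},\mathbf{Y},\mathbf{Z}$ be Banach spaces, and let $\mathcal{S}_{\mathbf{X}}\subset\mathbf{X}$, $\mathcal{S}_{\mathbf{Y}}\subset\mathbf{Y}$, $\mathcal{S}\subset\mathbf{Z}$. Assume that 1. $s^\ast_{\mathbf{X}}(\mathcal{S}_{\mathbf{X}})=s^\ast_{\mathbf{Y}}(\mathcal{S}_{\mathbf{Y}})$; 2. there exists a Lipschitz continuous map $\Phi:\mathcal{S}_{\mathbf{X}}\to\mathbf{Z}$ with $\Phi(\mathcal{S}_{\mathbf{X}})\supset\mathcal{S}$; 3. there exists a Borel probability measure $\mathbb{P}$ on $\mathcal{S}_{\mathbf{Y}}$ that is critical for $\mathcal{S}_{\mathbf{Y}}$ with respect to $\mathbf{Y}$; 4. there exists a measurable map $\Psi:\mathcal{S}_{\mathbf{Y}}\to\mathcal{S}$ and $\kappa>0$ with $\|\Psi(\mathbf{x})-\Psi(\mathbf{x}')\|_{\mathbf{Z}}\ge\kappa\|\mathbf{x}-\mathbf{x}'\|_{\mathbf{Y}}$ for all $\mathbf{x},\mathbf{x}'\in\mathcal{S}_{\mathbf{Y}}$. Then $s^\ast_{\mathbf{Z}}(\mathcal{S})=s^\ast_{\mathbf{X}}(\mathcal{S}_{\mathbf{X}})$, and the push-forward measure $\mathbb{P}\circ\Psi^{-1}$ is a Borel probability measure on $\mathcal{S}$ that is critical for $\mathcal{S}$ with respect to $\mathbf{Z}$.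
   Context: For a real Banach space $\mathbf{X}$ and $\mathcal{S}\subset\mathbf{X}$: a codec is a sequence $((E_R,D_R))_{R\in\mathbb{N}}$ of maps $E_R:\mathcal{S}\to\{0,1\}^R$, $D_R:\{0,1\}^R\to\mathbf{X}$; distortion $\delta_{\mathcal{S},\mathbf{X}}(E_R,D_R)=\sup_{\mathbf{x}\in\mathcal{S}}\|\mathbf{x}-D_R(E_R(\mathbf{x}))\|_{\mathbf{X}}$; optimal compression rate $s^\ast_{\mathbf{X}}(\mathcal{S})=\sup\{s\ge0:\exists\text{ codec with }\sup_RR^s\delta_{\mathcal{S},\mathbf{X}}(E_R,D_R)<\infty\}$. Subsets are equipped with the trace of the Borel $\sigma$-algebra of the ambient space (this also defines measurability of $\Psi$). A Borel probability measure $\mathbb{P}$ on $\mathcal{S}$ has (logarithmic) growth order $s_0\in[0,\infty)$ w.r.t. $\mathbf{X}$ if for every $s>s_0$ there exist $\varepsilon_0,c>0$ with $\mathbb{P}(\mathcal{S}\cap\mathcal{B}(\mathbf{x},\varepsilon;\mathbf{X}))\le2^{-c\varepsilon^{-1/s}}$ for all $\mathbf{x}\in\mathbf{X}$, $\varepsilon\in(0,\varepsilon_0)$ (closed balls); it is critical for $\mathcal{S}$ w.r.t. $\mathbf{X}$ if it has growth order $s^\ast_{\mathbf{X}}(\mathcal{S})$. *)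

(* Defs.v *)
From HB Require Import structures.
From mathcomp Require Import all_boot all_order all_algebra.
From mathcomp Require Import all_classical all_reals all_analysis.
Set Implicit Arguments. Unset Strict Implicit. Unset Printing Implicit Defensive.
Import Order.TTheory GRing.Theory Num.Theory.
Import numFieldNormedType.Exports.
Local Open Scope classical_set_scope.
Local Open Scope ring_scope.

Section Defs.
Variable R : realType.

Definition sub (X : normedModType R) (S : set X) := {x : X | S x}.

(* Trace on S of the Borel sigma-algebra of X: generated by traces of open
   sets (this equals { B ∩ S | B Borel }). *)
Definition trace_borel (X : normedModType R) (S : set X) : set (set (sub S)) :=
  <<s [set (@proj1_sig X S) @^-1` U | U in [set U : set X | open U]] >>.
Arguments trace_borel {X} S _.

Definition borel_probability (X : normedModType R) (S : set X)
    (P : set (sub S) -> \bar R) : Prop :=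
  [/\ forall A, trace_borel S A -> (0 <= P A)%E,
      P setT = 1%E &
      forall F : nat -> set (sub S),
        (forall n, trace_borel S (F n)) -> trivIset setT F ->
        (fun n => \sum_(0 <= i < n) P (F i))%E @ \oo --> P (\bigcup_n F n)].

Definition trace_measurable (X Y : normedModType R) (SX : set X) (SY : set Y)
    (f : sub SX -> sub SY) : Prop :=
  forall B, trace_borel SY B -> trace_borel SX (f @^-1` B).

Definition distortion (X : normedModType R) (S : set X) (n : nat)
    (E : sub S -> n.-tuple bool) (D : n.-tuple bool -> X) : \bar R :=
  ereal_sup [set (`| proj1_sig x - D (E x) |)%:E | x in [set: sub S]].

Definition admissible_rate (X : normedModType R) (S : set X) (s : R) : Prop :=
  0 <= s /\
  exists (E : forall n : nat, sub S -> n.-tuple bool)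
         (D : forall n : nat, n.-tuple bool -> X),
    (ereal_sup (range (fun n : nat =>
        ((n%:R `^ s)%R%:E * distortion (E n) (D n))%E)) < +oo)%E.

Definition opt_rate (X : normedModType R) (S : set X) : \bar R :=
  ereal_sup [set s%:E | s in [set s | admissible_rate S s]].

Definition growth_order (X : normedModType R) (S : set X)
    (P : set (sub S) -> \bar R) (s0 : R) : Prop :=
  0 <= s0 /\
  forall s, s0 < s ->
    exists eps0 c : R, 0 < eps0 /\ 0 < c /\
      forall (x : X) (eps : R), 0 < eps -> eps < eps0 ->
        (P [set y : sub S | (`| proj1_sig y - x | <= eps)%R]
           <= (2 `^ (- (c * eps `^ (- s^-1))))%R%:E)%E.

Definition critical (X : normedModType R) (S : set X)
    (P : set (sub S) -> \bar R) : Prop :=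
  exists s0 : R, opt_rate S = s0%:E /\ growth_order P s0.

End Defs.

(* Main.v *)
Require Import Defs.
From HB Require Import structures.
From mathcomp Require Import all_boot all_order all_algebra.
From mathcomp Require Import all_classical all_reals all_analysis.
From mathcomp Require Import lra.
Import Order.TTheory GRing.Theory Num.Theory.
Import numFieldNormedType.Exports.
Local Open Scope classical_set_scope.
Local Open Scope ring_scope.


Lemma powR_big (R : realType) (b r y : R) : 0 <= b -> 0 < r -> 0 <= y ->
  b `^ r^-1 < y -> b < y `^ r.
Proof.
move=> b0 r0 y0 h.
have := gt0_ltr_powR r0 _ _ h; rewrite -powRrM mulVf ?gt_eqF // powRr1 //.
apply; by rewrite nnegrE ?powR_ge0.
Qed.

Lemma exp2_lt1 (R : realType) (x : R) : x < 0 -> 2 `^ x < 1.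
Proof.
move=> hx; rewrite /powR pnatr_eq0 /= expR_lt1.
by rewrite nmulr_rlt0 // ln_gt0 // ltr1n.
Qed.

Lemma sub_big_setU (I : eqType) (T : Type) (l : seq I) (f : I -> set T) a :
  a \in l -> f a `<=` \big[setU/set0]_(i <- l) f i.
Proof.
elim: l => // b l IH; rewrite in_cons big_cons => /orP[/eqP -> | /IH h].
  by move=> x fx; left.
by move=> x /h; right.
Qed.

Section Infra.
Variables (R : realType) (X : normedModType R) (S : set X).

Lemma tb_C (A : set (sub S)) : @trace_borel R X S A -> @trace_borel R X S (~` A).
Proof. by move=> h; rewrite -setTD; exact: sigma_algebraCD. Qed.

Lemma tb_U (A B : set (sub S)) : @trace_borel R X S A -> @trace_borel R X S B -> @trace_borel R X S (A `|` B).
Proof.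
move=> hA hB; rewrite -bigcup2E; apply: sigma_algebra_bigcup => -[|[|n]] //=.
exact: sigma_algebra0.
Qed.

Lemma tb_I (A B : set (sub S)) : @trace_borel R X S A -> @trace_borel R X S B -> @trace_borel R X S (A `&` B).
Proof.
move=> hA hB; rewrite -[A `&` B]setCK setCI; apply: tb_C; apply: tb_U; exact: tb_C.
Qed.

Lemma tb_D (A B : set (sub S)) : @trace_borel R X S A -> @trace_borel R X S B -> @trace_borel R X S (A `\` B).
Proof. by move=> hA hB; rewrite setDE; apply: tb_I => //; exact: tb_C. Qed.

Lemma tb_ball (x : X) (e : R) : @trace_borel R X S [set y : sub S | `|proj1_sig y - x| <= e].
Proof.
have -> : [set y : sub S | `|proj1_sig y - x| <= e] =
   ~` (@proj1_sig X S @^-1` [set y : X | e < `|y - x|]).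
  apply/seteqP; split => y /=; rewrite ltNge => h.
  by apply/negP; rewrite negbK. by apply/negP => /negP.
apply: tb_C; apply: sub_sigma_algebra; exists [set y : X | e < `|y - x|] => //.
rewrite /=.
have -> : [set y : X | e < `|y - x|] = (fun y => `|y - x|) @^-1` [set r | e < r] by [].
apply: open_comp; last exact: open_gt.
move=> y _; apply: (@continuous_comp _ _ _ (fun y0 : X => y0 - x) (@Num.norm _ X)); last exact: norm_continuous.
by apply: cvgB; [exact: cvg_id | exact: cvg_cst].
Qed.

Variable (P : set (sub S) -> \bar R).
Hypothesis hP : borel_probability P.
Local Notation TB := (@trace_borel R X S).

Lemma tb0 : TB set0. Proof. exact: sigma_algebra0. Qed.
Lemma tbT : TB setT. Proof. by rewrite -setC0; apply: tb_C; exact: tb0. Qed.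

Lemma P_sum_le (F : nat -> set (sub S)) n :
  (forall n, TB (F n)) -> trivIset setT F ->
  (\sum_(0 <= i < n) P (F i) <= P (\bigcup_n F n))%E.
Proof.
case: hP => h0 _ hs mF tF.
rewrite -(cvg_lim _ (hs F mF tF)) //.
by apply: nneseries_lim_ge => k _ _; exact: h0.
Qed.

Lemma P0 : P set0 = 0%E.
Proof.
case: hP => h0 hT hs.
have hm : forall n, TB (bigcup2 setT set0 n).
  by move=> [|[|i]] /=; [exact: tbT|exact: tb0|exact: tb0].
have ht : trivIset setT (bigcup2 (@setT (sub S)) set0).
  by rewrite -trivIset_bigcup2 setI0.
have := @P_sum_le (bigcup2 setT set0) 2 hm ht.
rewrite bigcup2E setU0 hT big_nat_recr //= big_nat_recr //= big_geq // add0e.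
move=> h; apply/eqP; rewrite eq_le h0 ?andbT; last exact: tb0.
by move: h; rewrite hT -{2}(adde0 1%E) leeD2lE.
Qed.

Lemma P_U2 A B : TB A -> TB B -> A `&` B = set0 -> P (A `|` B) = (P A + P B)%E.
Proof.
move=> hA hB hAB; case: hP => h0 hT hs.
have hm : forall n, TB (bigcup2 A B n).
  by move=> [|[|i]] /=; [exact: hA|exact: hB|exact: tb0].
have ht : trivIset setT (bigcup2 A B) by rewrite -trivIset_bigcup2.
have := hs _ hm ht; rewrite bigcup2E => h1.
rewrite -(cvg_lim _ h1) //; apply: cvg_lim => //; apply: cvg_near_cst.
exists 2%N => // n /= hn.
case: n hn => [|[|m]] // _.
rewrite big_ltn // big_ltn //= big_nat_cond big1 ?adde0 //.
move=> i /andP[/andP[hi _] _]; case: i hi => [|[|i]] // _; exact: P0.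
Qed.

Lemma P_mono A B : TB A -> TB B -> A `<=` B -> (P A <= P B)%E.
Proof.
move=> hA hB hAB; rewrite -(setDUK hAB) (P_U2 _ _ hA (tb_D _ _ hB hA)).
- apply: leeDl; case: hP => h0 _ _; apply: h0; exact: tb_D.
- by rewrite setDE setICA setICr setI0.
Qed.

Lemma P_sub2 A B : TB A -> TB B -> (P (A `|` B) <= P A + P B)%E.
Proof.
move=> hA hB.
have hAB : A `<=` A `|` B by move=> x; left.
have hD : TB ((A `|` B) `\` A) by apply: tb_D => //; exact: tb_U.
rewrite -{1}(setDUK hAB) (P_U2 _ _ hA hD); last by rewrite setDE setICA setICr setI0.
apply: leeD2l; apply: P_mono.
- by apply: tb_D => //; exact: tb_U.
- exact: hB.
- by move=> x [[]].
Qed.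

Lemma tb_big (I : Type) (l : seq I) (f : I -> set (sub S)) :
  (forall i, TB (f i)) -> TB (\big[setU/set0]_(i <- l) f i).
Proof.
move=> hf; elim: l => [|a l IH]; first by rewrite big_nil; exact: tb0.
by rewrite big_cons; apply: tb_U.
Qed.

Lemma P_big (I : Type) (l : seq I) (f : I -> set (sub S)) :
  (forall i, TB (f i)) ->
  (P (\big[setU/set0]_(i <- l) f i) <= \sum_(i <- l) P (f i))%E.
Proof.
move=> hf; elim: l => [|a l IH]; first by rewrite !big_nil P0.
rewrite !big_cons; apply: le_trans (P_sub2 _ _ (hf a) (@tb_big _ l f hf)) _.
exact: leeD2l.
Qed.

Lemma growth_adm s0 (hg : growth_order P s0) s : admissible_rate S s -> s <= s0.
Proof.
move=> [hs [E [D hsup]]].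
case: hg => hs0 hg.
rewrite leNgt; apply/negP => hs0s.
pose s' := (s0 + s) / 2.
have hs'1 : s0 < s' by rewrite /s'; lra.
have hs'2 : s' < s by rewrite /s'; lra.
have hs'0 : 0 < s' by rewrite /s'; lra.
have [eps0 [c [he0 [hc hball]]]] := hg s' hs'1.
have [K [hK hKb]] : exists K : R, 0 < K /\ forall n,
    ((n%:R `^ s)%:E * distortion (E n) (D n) <= K%:E)%E.
  move: hsup; set sup := ereal_sup _ => hsup.
  have hub : forall n, ((n%:R `^ s)%:E * distortion (E n) (D n) <= sup)%E.
    by move=> n; apply: ereal_sup_ubound; exists n.
  move: sup hsup hub => [r| |] // _ hub.
  - exists (`|r| + 1); split; first by rewrite ltr_pwDr.
    move=> n; apply: le_trans (hub n) _; rewrite lee_fin.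
    by rewrite (le_trans (ler_norm r)) // lerDl.
  - by exists 1; split => // n; apply: le_trans (hub n) _; exact: leNye.
have hpt : forall n (x : sub S), (0 < n)%N ->
    `|proj1_sig x - D n (E n x)| <= K * n%:R `^ (- s).
  move=> n x hn.
  have hns : 0 < n%:R `^ s by apply: powR_gt0; rewrite ltr0n.
  have h1 : ((n%:R `^ s * `|proj1_sig x - D n (E n x)|)%:E <= K%:E)%E.
    apply: le_trans (hKb n); rewrite EFinM; apply: lee_wpmul2l.
      by rewrite lee_fin ltW.
    by apply: ereal_sup_ubound; exists x.
  rewrite lee_fin in h1.
  by rewrite powRN ler_pdivlMr // mulrC.
pose t := s'^-1.
pose a := c * K `^ (- t).
pose r := s * t - 1.
have ha : 0 < a by rewrite mulr_gt0 // powR_gt0.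
have hr : 0 < r by rewrite /r subr_gt0 /t ltr_pdivlMr // mul1r.
have hs0' : 0 < s by lra.
pose B := 1 + (a^-1) `^ (r^-1) + (K / eps0) `^ (s^-1).
pose n := (Num.trunc B).+1.
have hnB : B < n%:R := truncnS_gt B.
have hB1 : 0 <= (a^-1) `^ (r^-1) := powR_ge0 _ _.
have hB2 : 0 <= (K / eps0) `^ (s^-1) := powR_ge0 _ _.
have hn1 : 1 < n%:R :> R by rewrite /B in hnB; lra.
have hn0 : (0 < n)%N by rewrite -(ltr0n R); lra.
have hnpos : 0 < n%:R :> R by lra.
have hA : a^-1 < n%:R `^ r.
  apply: powR_big; [by rewrite invr_ge0 ltW | exact: hr | lra | by rewrite /B in hnB; lra].
have hE : K / eps0 < n%:R `^ s.
  apply: powR_big; [by rewrite divr_ge0 // ltW | exact: hs0' | lra | by rewrite /B in hnB; lra].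
pose eps := K * n%:R `^ (-s).
have heps : 0 < eps by rewrite mulr_gt0 // powR_gt0.
have heps0 : eps < eps0.
  by rewrite /eps powRN -/(K / _) ltr_pdivrMr ?powR_gt0 // mulrC -ltr_pdivrMr.
have hcov : [set: sub S] `<=` \big[setU/set0]_(t0 <- index_enum (n.-tuple bool))
    [set y : sub S | `|proj1_sig y - D n t0| <= eps].
  move=> x _; apply: (@sub_big_setU _ _ _ _ (E n x)); first by rewrite mem_index_enum.
  exact: hpt.
have h1 : (1 <= \sum_(t0 <- index_enum (n.-tuple bool))
      P [set y : sub S | (`|proj1_sig y - D n t0| <= eps)%R])%E.
  have hb : forall t0 : n.-tuple bool,
      TB [set y : sub S | (`|proj1_sig y - D n t0| <= eps)%R] by move=> t0; exact: tb_ball.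
  case: hP => _ hT _; rewrite -hT.
  apply: (le_trans _ (@P_big _ _ _ hb)).
  apply: P_mono; [exact: tbT | | exact: hcov].
  exact: tb_big.
have h2 := @lee_sum _ _ _ (fun=> (2 `^ (- (c * eps `^ (- t))))%:E)
  (index_enum (n.-tuple bool)) xpredT (fun t0 _ => hball (D n t0) eps heps heps0).
have := le_trans h1 h2.
rewrite sumEFin sumr_const card_tuple card_bool lee_fin.
apply/negP; rewrite -ltNge.
rewrite -[_ *+ _]mulr_natr natrX -powR_mulrn // -powRD; last by rewrite pnatr_eq0 implybT.
apply: exp2_lt1.
have -> : eps `^ (- t) = K `^ (- t) * n%:R `^ (s * t).
  rewrite /eps powRM ?powR_ge0 ?(ltW hK) //.
  by rewrite -powRrM mulrNN.
have -> : n%:R `^ (s * t) = n%:R * n%:R `^ r.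
  by rewrite /r -{1}(subrK 1 (s * t)) addrC powRD ?powRr1 ?(ltW hnpos) // pnatr_eq0 implybT.
have h3 : 1 < a * n%:R `^ r.
  have h5 : a * a^-1 < a * n%:R `^ r by rewrite ltr_pM2l.
  by rewrite mulfV ?gt_eqF in h5.
rewrite /a in h3.
have h4 : 0 < n%:R `^ r := powR_gt0 _ hnpos.
nra.
Qed.
End Infra.

Section Lip.
Variables (R : realType).

Lemma adm_K (X : normedModType R) (S : set X) s
  (E : forall n : nat, sub S -> n.-tuple bool) (D : forall n : nat, n.-tuple bool -> X) :
  (ereal_sup (range (fun n : nat =>
        ((n%:R `^ s)%R%:E * distortion (E n) (D n))%E)) < +oo)%E ->
  exists K : R, 0 < K /\ forall n x, 0 < n%:R `^ s ->
    `|proj1_sig x - D n (E n x)| <= K / n%:R `^ s.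
Proof.
move=> hsup.
have [K [hK hKb]] : exists K : R, 0 < K /\ forall n,
    ((n%:R `^ s)%:E * distortion (E n) (D n) <= K%:E)%E.
  move: hsup; set sup := ereal_sup _ => hsup.
  have hub : forall n, ((n%:R `^ s)%:E * distortion (E n) (D n) <= sup)%E.
    by move=> n; apply: ereal_sup_ubound; exists n.
  move: sup hsup hub => [r| |] // _ hub.
  - exists (`|r| + 1); split; first by rewrite ltr_pwDr.
    move=> n; apply: le_trans (hub n) _; rewrite lee_fin.
    by rewrite (le_trans (ler_norm r)) // lerDl.
  - by exists 1; split => // n; apply: le_trans (hub n) _; exact: leNye.
exists K; split => // n x hns.
have h1 : ((n%:R `^ s * `|proj1_sig x - D n (E n x)|)%:E <= K%:E)%E.
  apply: le_trans (hKb n); rewrite EFinM; apply: lee_wpmul2l.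
    by rewrite lee_fin ltW.
  by apply: ereal_sup_ubound; exists x.
rewrite lee_fin in h1.
by rewrite ler_pdivlMr // mulrC.
Qed.

Lemma K_adm (X : normedModType R) (S : set X) s
  (E : forall n : nat, sub S -> n.-tuple bool) (D : forall n : nat, n.-tuple bool -> X)
  (K : R) : 0 < K -> (forall n x, 0 < n%:R `^ s ->
    `|proj1_sig x - D n (E n x)| <= K / n%:R `^ s) ->
  (ereal_sup (range (fun n : nat =>
        ((n%:R `^ s)%R%:E * distortion (E n) (D n))%E)) < +oo)%E.
Proof.
move=> hK hb; apply: (@le_lt_trans _ _ K%:E); last exact: ltry.
apply: ub_ereal_sup => _ [n _ <-].
have [hz|hnz] := eqVneq (n%:R `^ s) 0.
  by rewrite hz mul0e lee_fin ltW.
have hns : 0 < n%:R `^ s by rewrite lt_neqAle eq_sym hnz powR_ge0.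
apply: (@le_trans _ _ ((n%:R `^ s)%:E * (K / n%:R `^ s)%:E)%E).
  apply: lee_wpmul2l; first by rewrite lee_fin ltW.
  apply: ub_ereal_sup => _ [x _ <-]; rewrite lee_fin; exact: hb.
by rewrite -EFinM mulrC divfK ?gt_eqF.
Qed.

Lemma adm_lip (X Z : normedModType R) (SX : set X) (S : set Z)
  (Phi : sub SX -> Z) (L : R)
  (hL : forall x x' : sub SX, `| Phi x - Phi x' | <= L * `| proj1_sig x - proj1_sig x' |)
  (hsurj : forall z : Z, S z -> exists x : sub SX, Phi x = z) s :
  admissible_rate SX s -> admissible_rate S s.
Proof.
move=> [hs [E [D hsup]]]; split => //.
have [K [hK hKb]] := @adm_K _ _ _ _ _ hsup.
have pre : forall z : sub S, {x : sub SX | Phi x = proj1_sig z}.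
  by move=> z; apply: cid; exact: hsurj _ (proj2_sig z).
pose E' n (z : sub S) := E n (proj1_sig (pre z)).
pose D' n (c : n.-tuple bool) : Z := match pselect (exists x, E n x = c) with
  | left h => Phi (proj1_sig (cid h)) | right _ => 0 end.
exists E', D'.
pose L' := `|L| + 1.
have hL' : 0 < L' by rewrite ltr_pwDr.
apply: (@K_adm _ _ _ _ _ (L' * (K + K))); first by rewrite mulr_gt0 // addr_gt0.
move=> n z hns.
rewrite /E' /D'.
set x := proj1_sig (pre z).
have hx : Phi x = proj1_sig z := proj2_sig (pre z).
case: pselect => [h|nh]; last by exfalso; apply: nh; exists x.
set x' := proj1_sig (cid h).
have hx' : E n x' = E n x := proj2_sig (cid h).
have b1 := hKb n x hns.
have b2 := hKb n x' hns.
rewrite hx' in b2.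
rewrite -hx.
apply: le_trans (hL x x') _.
have hLL : L <= L' by rewrite /L' (le_trans (ler_norm L)) // lerDl.
apply: (@le_trans _ _ (L' * `|proj1_sig x - proj1_sig x'|)).
  by apply: ler_wpM2r.
rewrite -mulrA ler_wpM2l ?(ltW hL') //.
rewrite mulrDl.
apply: le_trans (ler_distD (D n (E n x)) _ _) _.
apply: lerD => //; by rewrite distrC.
Qed.
End Lip.

Section Push.
Variables (R : realType) (Y Z : normedModType R) (SY : set Y) (S : set Z).
Variables (P : set (sub SY) -> \bar R) (hP : borel_probability P).
Variables (Psi : sub SY -> sub S) (hPsi : trace_measurable Psi).
Variables (kappa : R) (hkappa : 0 < kappa).
Hypothesis hPsi_low : forall x x' : sub SY,
     kappa * `| proj1_sig x - proj1_sig x' |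
       <= `| proj1_sig (Psi x) - proj1_sig (Psi x') |.

Lemma push_prob : borel_probability (fun A : set (sub S) => P (Psi @^-1` A)).
Proof.
case: hP => h0 hT hs; split.
- by move=> A hA; apply: h0; exact: hPsi.
- by rewrite preimage_setT.
- move=> F hF tF; rewrite preimage_bigcup; apply: hs.
    by move=> n; apply: hPsi.
  move=> i j _ _ [y [h1 h2]]; by apply: tF => //; exists (Psi y).
Qed.

Lemma push_growth s0 : growth_order P s0 ->
  growth_order (fun A : set (sub S) => P (Psi @^-1` A)) s0.
Proof.
case=> hs0 hg; split => // s hs.
have hs' : 0 < s by lra.
have [eps0 [c [he0 [hc hb]]]] := hg s hs.
exists (eps0 * kappa / 2), (c * (2 / kappa) `^ (- s^-1)); split; [| split].
- by rewrite divr_gt0 // mulr_gt0.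
- by rewrite mulr_gt0 // powR_gt0 // divr_gt0.
move=> z eps he heps.
set A := Psi @^-1` [set y : sub S | `|proj1_sig y - z| <= eps].
have hA : @trace_borel R Y SY A := hPsi _ (tb_ball _ _ _ _ _).
case: (pselect (exists y0, A y0)) => [[y0 hy0]|hne]; last first.
  have -> : A = set0.
    by apply/seteqP; split => y hy //; exfalso; apply: hne; exists y.
  by rewrite (@P0 _ _ _ _ hP) lee_fin powR_ge0.
have hsub : A `<=` [set y | `|proj1_sig y - proj1_sig y0| <= 2 / kappa * eps].
  move=> y hy; rewrite /= mulrC mulrA ler_pdivlMr //.
  have h := hPsi_low y y0.
  have h2 : `|proj1_sig (Psi y) - proj1_sig (Psi y0)| <= 2 * eps.
    apply: le_trans (ler_distD z _ _) _.
    rewrite /A /= in hy hy0; rewrite (distrC z).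
    have := lerD hy hy0; lra.
  rewrite [X in X <= _]mulrC [X in _ <= X]mulrC; exact: le_trans h h2.
have he' : 0 < 2 / kappa * eps by rewrite mulr_gt0 // divr_gt0.
have he0' : 2 / kappa * eps < eps0.
  rewrite mulrC mulrA ltr_pdivrMr //.
  move: heps; rewrite ltr_pdivlMr //; lra.
apply: le_trans (@P_mono _ _ _ _ hP _ _ hA (tb_ball _ _ _ _ _) hsub) _.
apply: le_trans (hb _ _ he' he0') _.
rewrite lee_fin powRM ?powR_ge0 ?(ltW he) //; last by rewrite divr_ge0 // ltW.
by rewrite mulrA.
Qed.
End Push.

Theorem theorem2p6 (R : realType) (X Y Z : completeNormedModType R)
  (SX : set X) (SY : set Y) (S : set Z)
  (h1 : opt_rate SX = opt_rate SY)
  (h2 : exists Phi : sub SX -> Z,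
          (exists L : R, forall x x' : sub SX,
             `| Phi x - Phi x' | <= L * `| proj1_sig x - proj1_sig x' |) /\
          (forall z : Z, S z -> exists x : sub SX, Phi x = z))
  (P : set (sub SY) -> \bar R)
  (hP : borel_probability P) (hPc : critical P)
  (Psi : sub SY -> sub S) (hPsi : trace_measurable Psi)
  (kappa : R) (hkappa : 0 < kappa)
  (hPsi_low : forall x x' : sub SY,
     kappa * `| proj1_sig x - proj1_sig x' |
       <= `| proj1_sig (Psi x) - proj1_sig (Psi x') |) :
  opt_rate S = opt_rate SX /\
  borel_probability (fun A : set (sub S) => P (Psi @^-1` A)) /\
  critical (fun A : set (sub S) => P (Psi @^-1` A)).
Proof.
move: h2 => [Phi [[L hL] hsurj]].
case: hPc => s0 [hs0E hgo].
have hQ := @push_prob _ _ _ _ _ _ hP _ hPsi.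
have hQg := @push_growth _ _ _ _ _ _ hP _ hPsi _ hkappa hPsi_low _ hgo.
have hle1 : (opt_rate SX <= opt_rate S)%E.
  apply: le_ereal_sup => _ [s hs <-]; exists s => //.
  exact: (@adm_lip _ _ _ _ _ _ _ hL hsurj).
have hle2 : (opt_rate S <= s0%:E)%E.
  apply: ub_ereal_sup => _ [s hs <-]; rewrite lee_fin.
  exact: (@growth_adm _ _ _ _ hQ _ hQg).
have hEq : opt_rate S = s0%:E.
  by apply/le_anti; rewrite hle2 /= -hs0E -h1.
split; first by rewrite hEq h1 hs0E.
split => //.
by exists s0; split.
Qed.
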